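(* Let $\varepsilon>0$, $W(x)=(x^2-1)^2$, and let $u(t)$ be the solution of the graph Allen–Cahn equation $$\dot u_i=-(\Delta u)_i-\frac1\varepsilon d_i^{-r}W'(u_i)\quad(i\in V,\ t>0)$$ with arbitrary initial condition $u(0)=u_0\in\mathcal V$. Let $\mathcal S=\{u\in\mathcal V:\|u\|_{\mathcal V}^2\le\frac{17}{4}n\,d_+^r\}$. Then $t\mapsto\|u(t)\|_{\mathcal V}^2$ is strictly decreasing at every $t$ with $u(t)\notin\mathcal S$. Consequently $\mathcal S$ is positively invariant, and every trajectory enters $\mathcal S$ in finite time.
   Context: $G=(V,E)$ is a finite undirected weighted graph with $n$ nodes $V=\{1,\dots,n\}$. The weights satisfy $\omega_{ij}=\omega_{ji}\ge0$, with $\omega_{ij}>0$ iff $\{i,j\}\in E$, and $\omega_{ii}=0$. The degrees are $d_i=\sum_j\omega_{ij}>0$, and $d_+=\max_id_i$. A parameter $r\in[0,1]$ is fixed. $\mathcal V$ is the space of functions $V\to\mathbb R$ with $\langle u,v\rangle_{\mathcal V}=\sum_iu_iv_id_i^r$ and $\|u\|_{\mathcal V}=\sqrt{\langle u,u\rangle_{\mathcal V}}$. The graph Laplacian is $(\Delta u)_i=d_i^{-r}\sum_j\omega_{ij}(u_i-u_j)$. *)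

(* Defs.v *)
From Stdlib Require Import Reals Lra Lia.
Open Scope R_scope.

(* Nodes are indexed 0..n-1 (corresponding to 1..n in the paper). *)
Fixpoint rsum (k : nat) (f : nat -> R) : R :=
  match k with
  | O => 0
  | S k' => rsum k' f + f k'
  end.

(* maximum of f 0, ..., f (k-1), with 0 for k = 0 (degrees are positive, so
   for n >= 1 this is the true maximum) *)
Fixpoint rmaxn (k : nat) (f : nat -> R) : R :=
  match k with
  | O => 0
  | S k' => Rmax (rmaxn k' f) (f k')
  end.

Definition deg (n : nat) (w : nat -> nat -> R) (i : nat) : R :=
  rsum n (fun j => w i j).

Definition dplus (n : nat) (w : nat -> nat -> R) : R :=
  rmaxn n (deg n w).

Definition weighted_graph (n : nat) (w : nat -> nat -> R) : Prop :=
  (forall i j, (i < n)%nat -> (j < n)%nat -> w i j = w j i) /\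
  (forall i j, (i < n)%nat -> (j < n)%nat -> 0 <= w i j) /\
  (forall i, (i < n)%nat -> w i i = 0) /\
  (forall i, (i < n)%nat -> 0 < deg n w i).

Definition normV2 (n : nat) (w : nat -> nat -> R) (r : R) (u : nat -> R) : R :=
  rsum n (fun i => u i * u i * Rpower (deg n w i) r).

Definition graphLap (n : nat) (w : nat -> nat -> R) (r : R) (u : nat -> R) (i : nat) : R :=
  Rpower (deg n w i) (- r) * rsum n (fun j => w i j * (u i - u j)).

(* W(x) = (x^2-1)^2, W'(x) = 4 x (x^2 - 1) *)
Definition Wdw (x : R) : R := 4 * x * (x * x - 1).

Definition AC_rhs (n : nat) (w : nat -> nat -> R) (r eps : R) (u : nat -> R) (i : nat) : R :=
  - graphLap n w r u i - / eps * Rpower (deg n w i) (- r) * Wdw (u i).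

Definition is_AC_solution (n : nat) (w : nat -> nat -> R) (r eps : R)
    (u0 : nat -> R) (u : R -> nat -> R) : Prop :=
  (forall i, (i < n)%nat -> u 0 i = u0 i) /\
  (forall i, (i < n)%nat -> forall t, 0 <= t ->
     forall e, 0 < e -> exists d, 0 < d /\
       forall s, 0 <= s -> Rabs (s - t) < d -> Rabs (u s i - u t i) < e) /\
  (forall i, (i < n)%nat -> forall t, 0 < t ->
     derivable_pt_lim (fun s => u s i) t (AC_rhs n w r eps (u t) i)).

Definition inS (n : nat) (w : nat -> nat -> R) (r : R) (u : nat -> R) : Prop :=
  normV2 n w r u <= 17 / 4 * INR n * Rpower (dplus n w) r.

(* Main.v *)
Require Import Defs.
From Stdlib Require Import Reals Lra Lia Psatz Classical.
Open Scope R_scope.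

Lemma rsum_ext k f g : (forall i, (i < k)%nat -> f i = g i) -> rsum k f = rsum k g.
Proof. induction k; simpl; intros H; auto. rewrite IHk by (intros; apply H; lia). rewrite H by lia. reflexivity. Qed.

Lemma rsum_plus k f g : rsum k (fun i => f i + g i) = rsum k f + rsum k g.
Proof. induction k; simpl; [ring|]. rewrite IHk; ring. Qed.

Lemma rsum_scal k c f : rsum k (fun i => c * f i) = c * rsum k f.
Proof. induction k; simpl; [ring|]. rewrite IHk; ring. Qed.

Lemma rsum_le k f g : (forall i, (i < k)%nat -> f i <= g i) -> rsum k f <= rsum k g.
Proof. induction k; simpl; intros H; [lra|]. assert (H1 := H k (Nat.lt_succ_diag_r k)).
  assert (rsum k f <= rsum k g) by (apply IHk; intros; apply H; lia). lra. Qed.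

Lemma rsum_const k c : rsum k (fun _ => c) = INR k * c.
Proof. induction k; cbn [rsum]; [simpl; ring|]. rewrite IHk, S_INR; ring. Qed.

Lemma rsum_swap n m (f : nat -> nat -> R) :
  rsum n (fun i => rsum m (fun j => f i j)) = rsum m (fun j => rsum n (fun i => f i j)).
Proof. induction n; simpl. rewrite rsum_const; simpl; ring.
  rewrite IHn, <- rsum_plus. reflexivity. Qed.

Lemma rsum_deriv k (F : nat -> R -> R) (F' : nat -> R) t :
  (forall i, (i < k)%nat -> derivable_pt_lim (F i) t (F' i)) ->
  derivable_pt_lim (fun s => rsum k (fun i => F i s)) t (rsum k F').
Proof. induction k; simpl; intros H.
  - apply derivable_pt_lim_const.
  - apply (derivable_pt_lim_plus (fun s => rsum k (fun i => F i s)) (F k)).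
    + apply IHk; intros; apply H; lia.
    + apply H; lia.
Qed.

Lemma rsum_cont k (F : nat -> R -> R) t :
  (forall i, (i < k)%nat -> continuity_pt (F i) t) ->
  continuity_pt (fun s => rsum k (fun i => F i s)) t.
Proof. induction k; simpl; intros H.
  - apply continuity_pt_const; intros x y; reflexivity.
  - apply (continuity_pt_plus (fun s => rsum k (fun i => F i s)) (F k)).
    + apply IHk; intros; apply H; lia.
    + apply H; lia.
Qed.

Lemma rmaxn_ge k f i : (i < k)%nat -> f i <= rmaxn k f.
Proof. induction k; simpl; intros H; [lia|].
  destruct (Nat.eq_dec i k). subst; apply Rmax_r.
  eapply Rle_trans; [apply IHk; lia| apply Rmax_l]. Qed.

Lemma sq_deriv f a c t : derivable_pt_lim f t a ->
  derivable_pt_lim (fun s => f s * f s * c) t (2 * f t * a * c).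
Proof. intros Hf.
  pose proof (derivable_pt_lim_mult _ _ _ _ _ (derivable_pt_lim_mult _ _ _ _ _ Hf Hf) (derivable_pt_lim_const c t)) as H.
  unfold mult_fct, fct_cte in H.
  replace (2 * f t * a * c) with ((a * f t + f t * a) * c + f t * f t * 0) by ring. exact H. Qed.

Lemma sq_cont f c t : continuity_pt f t -> continuity_pt (fun s => f s * f s * c) t.
Proof. intros Hf.
  pose proof (continuity_pt_mult _ _ _ (continuity_pt_mult _ _ _ Hf Hf)
    (continuity_pt_const (fct_cte c) t (fun x y => eq_refl))) as H.
  exact H. Qed.

Lemma cont_eps f x : continuity_pt f x -> forall e, 0 < e -> exists d, 0 < d /\
  forall y, Rabs (y - x) < d -> Rabs (f y - f x) < e.
Proof. intros H e He. destruct (H e He) as [d [Hd Hy]]. exists d; split; [lra|].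
  intros y Hyx. destruct (Req_dec x y) as [->|Hne].
  - unfold Rminus; rewrite Rplus_opp_r, Rabs_R0; lra.
  - apply (Hy y). split; [split; [exact I| exact Hne]|]. exact Hyx. Qed.

Definition Lval n w r eps (v : nat -> R) :=
  rsum n (fun i => 2 * v i * AC_rhs n w r eps v i * Rpower (deg n w i) r).

Lemma Lval_neg n w r eps v : weighted_graph n w -> 0 <= r -> 0 < eps ->
  ~ inS n w r v -> Lval n w r eps v < - 50 / eps.
Proof.
  intros [Hsym [Hpos [Hdiag Hdeg]]] Hr He HS.
  set (X := rsum n (fun i => v i * rsum n (fun j => w i j * (v i - v j)))).
  set (Y := rsum n (fun i => v i * Wdw (v i))).
  assert (HL : Lval n w r eps v = -2 * X + (- (2 / eps)) * Y).
  { unfold X, Y, Lval. rewrite <- !rsum_scal, <- rsum_plus. apply rsum_ext; intros i Hi.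
    unfold AC_rhs, graphLap.
    assert (Hp : Rpower (deg n w i) (- r) * Rpower (deg n w i) r = 1).
    { rewrite <- Rpower_plus. replace (-r + r) with 0 by ring. apply Rpower_O; auto. }
    set (L := rsum n (fun j : nat => w i j * (v i - v j))).
    set (a := Rpower (deg n w i) (- r)) in *. set (b := Rpower (deg n w i) r) in *.
    transitivity (2 * v i * (-L - /eps * Wdw (v i)) * (a * b)); [ring|].
    rewrite Hp. field. lra. }
  assert (HX : 0 <= X).
  { assert (H2 : X + X = rsum n (fun i => rsum n (fun j => w i j * (v i - v j) * (v i - v j)))).
    { assert (HX1 : X = rsum n (fun i => rsum n (fun j => w i j * v i * (v i - v j)))).
      { unfold X; apply rsum_ext; intros i Hi. rewrite <- rsum_scal. apply rsum_ext; intros; ring. }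
      assert (HX2 : X = rsum n (fun i => rsum n (fun j => w i j * v j * (v j - v i)))).
      { rewrite HX1, rsum_swap. apply rsum_ext; intros i Hi. apply rsum_ext; intros j Hj.
        rewrite Hsym by auto. reflexivity. }
      rewrite HX1 at 1. rewrite HX2, <- rsum_plus. apply rsum_ext; intros i Hi.
      rewrite <- rsum_plus. apply rsum_ext; intros; ring. }
    assert (0 <= X + X); [|lra]. rewrite H2. rewrite <- (Rmult_0_r (INR n)), <- rsum_const.
    apply rsum_le; intros i Hi. rewrite <- (Rmult_0_r (INR n)), <- rsum_const.
    apply rsum_le; intros j Hj. pose proof (Hpos i j Hi Hj). 
    rewrite Rmult_assoc. apply Rmult_le_pos; [auto| apply Rle_0_sqr]. }
  set (P := Rpower (dplus n w) r).
  assert (HP : 0 < P) by (unfold P, Rpower; apply exp_pos).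
  set (S2 := rsum n (fun i => v i * v i)).
  assert (HDS : normV2 n w r v <= P * S2).
  { unfold S2; rewrite <- rsum_scal. unfold normV2. apply rsum_le; intros i Hi.
    assert (Rpower (deg n w i) r <= P).
    { unfold P, dplus. apply Rle_Rpower_l; auto. split; auto. apply rmaxn_ge; auto. }
    assert (0 <= v i * v i) by nra. nra. }
  unfold inS in HS. fold P in HS.
  assert (HS2 : 17 / 4 * INR n < S2).
  { apply (Rmult_lt_reg_l P); auto. nra. }
  destruct n as [|n'].
  { unfold S2 in HS2; simpl in HS2. lra. }
  assert (Hn : 1 <= INR (S n')) by (rewrite S_INR; pose proof (pos_INR n'); lra).
  assert (HY : 8 * S2 - 9 * INR (S n') <= Y).
  { unfold S2, Y.
    replace (8 * rsum (S n') (fun i : nat => v i * v i) - 9 * INR (S n')) with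
      (rsum (S n') (fun i => 8 * (v i * v i) + (-1) * 9)).
    2:{ rewrite rsum_plus, rsum_scal, rsum_const. ring. }
    apply rsum_le; intros i Hi. unfold Wdw. clear HS. pose proof (Rle_0_sqr (2*v i*v i - 3)) as Hq. unfold Rsqr in Hq. nra. }
  rewrite HL.
  assert (25 < Y) by nra.
  assert (2 / eps * 25 < 2 / eps * Y).
  { apply Rmult_lt_compat_l; auto. apply Rdiv_lt_0_compat; lra. }
  assert (- 50 / eps = - (2 / eps * 25)) by (field; lra).
  lra.
Qed.

Lemma N_deriv n w r eps u0 u t : is_AC_solution n w r eps u0 u -> 0 < t ->
  derivable_pt_lim (fun s => normV2 n w r (u s)) t (Lval n w r eps (u t)).
Proof. intros [_ [_ Hd]] Ht. unfold normV2, Lval.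
  apply (rsum_deriv n (fun i s => u s i * u s i * Rpower (deg n w i) r)).
  intros i Hi. apply (sq_deriv (fun s => u s i)). apply Hd; auto. Qed.

Lemma Rmax_lip x t : 0 <= t -> Rabs (Rmax 0 x - t) <= Rabs (x - t).
Proof. intros Ht. unfold Rmax. destruct (Rle_dec 0 x); [lra|].
  unfold Rabs; destruct (Rcase_abs (0 - t)); destruct (Rcase_abs (x - t)); lra. Qed.

Lemma N_cont n w r eps u0 u t : is_AC_solution n w r eps u0 u -> 0 <= t ->
  continuity_pt (fun s => normV2 n w r (u (Rmax 0 s))) t.
Proof. intros [_ [Hc _]] Ht. unfold normV2.
  apply (rsum_cont n (fun i s => u (Rmax 0 s) i * u (Rmax 0 s) i * Rpower (deg n w i) r)).
  intros i Hi. apply (sq_cont (fun s => u (Rmax 0 s) i)).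
  intros e He. destruct (Hc i Hi t Ht e He) as [d [Hd Hs]]. exists d; split; [lra|].
  intros x [_ Hx]. simpl in *. unfold R_dist in *.
  rewrite (Rmax_right 0 t Ht). apply Hs. apply Rmax_l.
  eapply Rle_lt_trans; [apply Rmax_lip; auto| exact Hx]. Qed.

Lemma normV2_nonneg n w r v : 0 <= normV2 n w r v.
Proof. unfold normV2. rewrite <- (Rmult_0_r (INR n)), <- rsum_const.
  apply rsum_le; intros i Hi. assert (0 < Rpower (deg n w i) r) by (unfold Rpower; apply exp_pos).
  assert (0 <= v i * v i) by nra. nra. Qed.

Theorem mainTheorem16 (n : nat) (w : nat -> nat -> R) (r eps : R)
  (u0 : nat -> R) (u : R -> nat -> R) :
  weighted_graph n w -> 0 <= r <= 1 -> 0 < eps ->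
  is_AC_solution n w r eps u0 u ->
  (* strict decrease of ||u(t)||^2 wherever u(t) is outside S *)
  (forall t, 0 < t -> ~ inS n w r (u t) ->
     exists l, l < 0 /\ derivable_pt_lim (fun s => normV2 n w r (u s)) t l) /\
  (* positive invariance of S *)
  (forall t0, 0 <= t0 -> inS n w r (u t0) -> forall t, t0 <= t -> inS n w r (u t)) /\
  (* finite-time entry into S *)
  (exists T, 0 <= T /\ inS n w r (u T)).
Proof.
  intros Hw Hr He Hsol.
  assert (H50 : - 50 / eps < 0) by (apply Rdiv_neg_pos; lra).
  assert (Hneg : forall c, 0 < c -> ~ inS n w r (u c) -> Lval n w r eps (u c) < - 50 / eps).
  { intros c Hc Hn. apply Lval_neg; auto; lra. }
  set (C := 17 / 4 * INR n * Rpower (dplus n w) r).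
  split; [|split].
  - intros t Ht Hn. exists (Lval n w r eps (u t)). split.
    + specialize (Hneg t Ht Hn). lra.
    + apply (N_deriv n w r eps u0 u); auto.
  - intros t0 Ht0 Hin t Htt. apply NNPP; intro Hout.
    unfold inS in Hin, Hout. fold C in Hin, Hout.
    assert (Hlt : t0 < t) by (destruct (Req_dec t0 t); [subst; contradiction|lra]).
    set (E := fun x => t0 <= x <= t /\ normV2 n w r (u x) <= C).
    destruct (completeness E) as [s [Hub Hlub]].
    { exists t. intros x [[_ Hx] _]. exact Hx. }
    { exists t0. split; [lra|exact Hin]. }
    assert (Hs0 : t0 <= s) by (apply Hub; split; [lra|exact Hin]).
    assert (Hst : s <= t) by (apply Hlub; intros x [[_ Hx] _]; exact Hx).
    assert (Hgs : normV2 n w r (u s) <= C).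
    { apply Rnot_lt_le; intro Hgt.
      destruct (cont_eps _ _ (N_cont n w r eps u0 u s Hsol ltac:(lra)) (normV2 n w r (u s) - C) ltac:(lra))
        as [d [Hd Hy]].
      assert (s <= s - d); [|lra]. apply Hlub. intros x [[Hx1 Hx2] Hx3].
      destruct (Rle_dec x (s - d)) as [|Hn]; [assumption|exfalso].
      assert (x <= s) by (apply Hub; split; [lra|exact Hx3]).
      assert (Hxs : Rabs (x - s) < d) by (unfold Rabs; destruct (Rcase_abs (x - s)); lra).
      specialize (Hy x Hxs). cbv beta in Hy.
      rewrite (Rmax_right 0 x) in Hy by lra. rewrite (Rmax_right 0 s) in Hy by lra.
      unfold Rabs in Hy; destruct (Rcase_abs _) in Hy; lra. }
    assert (Hst' : s < t) by (destruct (Req_dec s t); [subst; contradiction|lra]).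
    assert (Hkey : forall s', s < s' < t -> normV2 n w r (u t) < normV2 n w r (u s')).
    { intros s' Hs'. destruct (MVT_cor2 (fun x => normV2 n w r (u x)) (fun c => Lval n w r eps (u c)) s' t)
        as [c [Hc1 Hc2]]; [lra| |].
      { intros c Hc. apply (N_deriv n w r eps u0 u); auto; lra. }
      assert (Hnc : ~ inS n w r (u c)).
      { intro Hin'. assert (c <= s); [|lra]. apply Hub. split; [lra|exact Hin']. }
      specialize (Hneg c ltac:(lra) Hnc). cbv beta in Hc1.
      assert (Lval n w r eps (u c) * (t - s') < 0).
      { apply Rmult_neg_pos; lra. }
      lra. }
    apply Rnot_le_lt in Hout.
    destruct (cont_eps _ _ (N_cont n w r eps u0 u s Hsol ltac:(lra)) (normV2 n w r (u t) - C) ltac:(lra))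
        as [d [Hd Hy]].
    set (s' := s + Rmin d (t - s) / 2).
    assert (Hm1 : Rmin d (t - s) <= d) by apply Rmin_l.
    assert (Hm2 : Rmin d (t - s) <= t - s) by apply Rmin_r.
    assert (Hm3 : 0 < Rmin d (t - s)) by (apply Rmin_glb_lt; lra).
    assert (Hxs : Rabs (s' - s) < d) by (unfold s', Rabs; destruct (Rcase_abs _); lra).
    specialize (Hy s' Hxs). cbv beta in Hy.
    rewrite (Rmax_right 0 s') in Hy by (unfold s'; lra). rewrite (Rmax_right 0 s) in Hy by lra.
    specialize (Hkey s' ltac:(unfold s'; lra)).
    unfold Rabs in Hy; destruct (Rcase_abs _) in Hy; lra.
  - apply NNPP; intro Hno.
    assert (HT : forall T, 0 <= T -> ~ inS n w r (u T)) by (intros T HT Hin; apply Hno; exists T; auto).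
    set (N1 := normV2 n w r (u 1)).
    assert (HN1 : 0 <= N1) by apply normV2_nonneg.
    set (T := 2 + N1 * eps / 50).
    assert (HT1 : 1 < T) by (unfold T; assert (0 <= N1 * eps / 50) by (apply Rmult_le_pos; [nra|lra]); lra).
    destruct (MVT_cor2 (fun x => normV2 n w r (u x)) (fun c => Lval n w r eps (u c)) 1 T)
        as [c [Hc1 Hc2]]; [lra| |].
    { intros c Hc. apply (N_deriv n w r eps u0 u); auto; lra. }
    specialize (Hneg c ltac:(lra) (HT c ltac:(lra))). cbv beta in Hc1. fold N1 in Hc1.
    assert (Lval n w r eps (u c) * (T - 1) < - 50 / eps * (T - 1)).
    { apply Rmult_lt_compat_r; lra. }
    assert (- 50 / eps * (T - 1) = - 50 / eps - N1) by (unfold T; field; lra).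
    pose proof (normV2_nonneg n w r (u T)). lra.
Qed.
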